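(* Let $\alpha\in(0,1)$. There is a constant $C$ depending only on $\alpha$ such that for all $f_1,f_2\in\mathcal V_1$, $$|c(f_1)-c(f_2)|\le C\,\|\rho(f_1-f_2)\|_{L^\infty}^{1-\alpha}.$$
   Context: Fix $\alpha\in(0,1)$ and set $c_{1,\alpha}=\frac{2^{2\alpha-1}\Gamma(\frac12+\alpha)}{\sqrt{\pi}\,\Gamma(1-\alpha)}$. Let $\rho(x)=(1+|x|)^{-\alpha}$ and $\mathcal V_0=\{f\in C(\mathbb{R}): f\text{ even},\ \|\rho f\|_{L^\infty}<\infty\}$. Let $\eta=2\left(\frac{3}{2(3-2\alpha)(5-2\alpha)(1+4^{\alpha})}\right)^{1/\min(\alpha,1-\alpha)}$. $\mathcal V_1$ is the set of $f\in\mathcal V_0$ such that $f(0)=1$; $f\ge0$ and $f$ is non-increasing on $[0,\infty)$; $x\mapsto f(\sqrt x)$ is convex on $[0,\infty)$; $f(x)\ge\max(0,1-x^2)$ for all $x$; and $f'_-(1/2)\le-\eta$. For $f\in\mathcal V_1$, $c(f)=\frac{2\alpha(1+2\alpha)}{3}c_{1,\alpha}\int_0^\infty\frac{1-f(\xi)}{\xi^{1+2\alpha}}\,d\xi$. *)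

(* Defs.v *)
From HB Require Import structures.
From mathcomp Require Import all_boot all_order all_algebra.
From mathcomp Require Import all_classical all_reals all_analysis.
Set Implicit Arguments. Unset Strict Implicit. Unset Printing Implicit Defensive.
Import Order.TTheory GRing.Theory Num.Theory numFieldNormedType.Exports.
Local Open Scope classical_set_scope.
Local Open Scope ring_scope.

Definition Gammaf (R : realType) (s : R) : R :=
  fine (\int[@lebesgue_measure R]_(t in `]0, +oo[%classic)
          ((t `^ (s - 1)) * expR (- t))%:E).

Definition c1 (R : realType) (a : R) : R :=
  2 `^ (2 * a - 1) * Gammaf (2^-1 + a) / (Num.sqrt pi * Gammaf (1 - a)).

Definition rho (R : realType) (a : R) (x : R) : R := (1 + `|x|) `^ (- a).

Definition wLinf (R : realType) (a : R) (g : R -> R) : R :=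
  sup [set `|rho a x * g x| | x in [set: R]].

Definition V0 (R : realType) (a : R) (f : R -> R) : Prop :=
  continuous f /\ (forall x, f (- x) = f x) /\
  (exists M : R, forall x, `|rho a x * f x| <= M).

Definition eta (R : realType) (a : R) : R :=
  2 * (3 / (2 * (3 - 2 * a) * (5 - 2 * a) * (1 + 4 `^ a)))
        `^ (1 / Order.min a (1 - a)).

Definition V1 (R : realType) (a : R) (f : R -> R) : Prop :=
  V0 a f /\
  f 0 = 1 /\
  (forall x, 0 <= f x) /\
  (forall x y, 0 <= x -> x <= y -> f y <= f x) /\
  (forall x y t, 0 <= x -> 0 <= y -> 0 <= t -> t <= 1 ->
     f (Num.sqrt ((1 - t) * x + t * y))
       <= (1 - t) * f (Num.sqrt x) + t * f (Num.sqrt y)) /\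
  (forall x, Num.max 0 (1 - x ^+ 2) <= f x) /\
  (exists L : R,
     ((fun h => (f (2^-1 + h) - f (2^-1)) / h) @ 0^'- --> L) /\ L <= - eta a).

Definition cf (R : realType) (a : R) (f : R -> R) : R :=
  2 * a * (1 + 2 * a) / 3 * c1 a *
  fine (\int[@lebesgue_measure R]_(xi in `]0, +oo[%classic)
          ((1 - f xi) / xi `^ (1 + 2 * a))%:E).

(* Main.v *)
Require Import Defs.
From HB Require Import structures.
From mathcomp Require Import all_boot all_order all_algebra.
From mathcomp Require Import all_classical all_reals all_analysis.
From mathcomp Require Import measurable_realfun lra zify ring.
Import Order.TTheory GRing.Theory Num.Theory numFieldNormedType.Exports.
Local Open Scope ring_scope.

Section S.
Variable R : realType.
Local Open Scope classical_set_scope.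
Local Open Scope ring_scope.
Lemma cont_powR (q x : R) : 0 < x -> {for x, continuous (@powR R ^~ q)}.
Proof.
move=> x0; apply: differentiable_continuous; apply/derivable1_diffP.
by apply: derivable_powR; rewrite in_itv /= andbT.
Qed.

Lemma cont_powRc (q c x : R) : 0 < x -> {for x, continuous (fun y => @powR R y q * c)}.
Proof.
move=> x0; apply: continuousM; [exact: cont_powR|exact: cst_continuous].
Qed.

Lemma powFTC (q l u : R) : 0 < l -> l < u -> q + 1 != 0 ->
 (\int[lebesgue_measure]_(x in `[l,u]) (x `^ q)%:E =
   ((u `^ (q+1) / (q+1) - l `^ (q+1) / (q+1)))%:E)%E.
Proof.
move=> l0 lu q1.
rewrite EFinB.
apply: (@continuous_FTC2 _ _ (fun x => x `^ (q+1) / (q+1))) => //.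
- apply: continuous_in_subspaceT => x; rewrite inE /= in_itv /= => /andP[lx _].
  exact: cont_powR (lt_le_trans l0 lx).
- split.
  + move=> x; rewrite in_itv /= => /andP[lx _].
    apply: derivableM => //.
    by apply: derivable_powR; rewrite in_itv /= andbT (lt_trans l0 lx).
  + by apply: cvg_at_right_filter; apply: cont_powRc.
  + by apply: cvg_at_left_filter; apply: cont_powRc; apply: lt_trans lu.
- move=> x; rewrite in_itv /= => /andP[lx _].
  have x0 : 0 < x by apply: lt_trans lx.
  rewrite derive1E deriveMr; last first.
    by apply: derivable_powR; rewrite in_itv /= andbT.
  rewrite -derive1E powR_derive1 ?in_itv /= ?andbT //.
  by rewrite addrK mulrA mulVf // mul1r.
Qed.
Local Open Scope ereal_scope.
Lemma nd_bound (S : nat -> set R) (g : R -> R) (B : R) :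
  nondecreasing_seq S -> (forall n, measurable (S n)) ->
  measurable_fun (\bigcup_n S n) g -> (forall x, (\bigcup_n S n) x -> (0 <= g x)%R) ->
  (forall n, \int[lebesgue_measure]_(x in S n) (g x)%:E <= B%:E) ->
  \int[lebesgue_measure]_(x in \bigcup_n S n) (g x)%:E <= B%:E.
Proof.
move=> nd mS mg g0 hB.
have := @ge0_nondecreasing_set_cvg_integral _ (measurableTypeR R) _ S (EFin \o g) (@lebesgue_measure R) nd mS.
have mg' : measurable_fun (T:=measurableTypeR R) (\bigcup_n S n) g := mg.
move=> H.
lapply H; last first.
  move=> i; apply/measurable_EFinP.
  apply: measurable_funS mg' => //.
    by apply: bigcup_measurable => k _; apply: mS.
  exact: bigcup_sup.
move=> {}H; lapply H; last first.
  by move=> i x Sx; rewrite lee_fin; apply: g0; exists i.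
move=> {}H.
rewrite -(cvg_lim _ H) //.
apply: lime_le; first by apply/cvg_ex; eexists; exact: H.
by apply: nearW => n; exact: hB.
Qed.

Lemma head_int (q e : R) : (0 < q+1)%R -> (0 < e)%R ->
  \int[lebesgue_measure]_(x in `]0%R, e%R]) (x `^ q)%:E <= (e `^ (q+1) / (q+1))%:E.
Proof.
move=> q0 e0.
have -> : `]0%R, e%R]%classic = \bigcup_n `[(e / n.+2%:R)%R, e%R]%classic.
  apply/seteqP; split => x /=.
    rewrite in_itv /= => /andP[x0 xe].
    exists (Num.truncn (e / x)) => //=; rewrite in_itv /= xe andbT.
    have h := truncnS_gt (e / x).
    rewrite ler_pdivrMr ?ltr0Sn //.
    rewrite ltr_pdivrMr // in h.
    apply/ltW/(lt_le_trans h); rewrite mulrC ler_pM2l // ler_nat; exact: leqW (ltnSn _).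
  move=> [n _]; rewrite /= !in_itv /= => /andP[h1 ->]; rewrite andbT.
  apply: lt_le_trans h1; rewrite divr_gt0 //.
apply: nd_bound.
- move=> n m nm; rewrite subsetEset => x; rewrite /= !in_itv /= => /andP[h1 ->]; rewrite andbT.
  apply: le_trans h1.
  rewrite ler_pdivrMr ?ltr0Sn // mulrAC ler_pdivlMr ?ltr0Sn // ler_pM2l // ler_nat; lia.
- by move=> n; exact: measurable_itv.
- by apply: measurable_funTS; exact: measurable_powR.
- by move=> x _; exact: powR_ge0.
- move=> n.
  have l0 : (0 < e / n.+2%:R)%R by rewrite divr_gt0.
  have le : (e / n.+2%:R < e)%R.
    by rewrite ltr_pdivrMr ?ltr0Sn // ltr_pMr // ltr1n.
  rewrite powFTC //; last by rewrite gt_eqF.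
  rewrite lee_fin.
  have : (0 <= (e / n.+2%:R) `^ (q + 1) / (q + 1))%R.
    by rewrite divr_ge0 // ?powR_ge0 // ltW.
  lra.
Qed.

Lemma tail_int (q e : R) : (q+1 < 0)%R -> (0 < e)%R ->
  \int[lebesgue_measure]_(x in `[e%R, +oo[) (x `^ q)%:E <= (- (e `^ (q+1) / (q+1)))%:E.
Proof.
move=> q0 e0.
have -> : `[e%R, +oo[%classic = \bigcup_n `[e%R, (e + n.+1%:R)%R]%classic.
  apply/seteqP; split => x /=.
    rewrite in_itv /= andbT => ex.
    exists (Num.truncn (x - e)) => //=; rewrite in_itv /= ex /=.
    have h := truncnS_gt (x - e).
    lra.
  by move=> [n _]; rewrite /= !in_itv /= andbT => /andP[].
apply: nd_bound.
- move=> n m nm; rewrite subsetEset => x; rewrite /= !in_itv /= => /andP[-> h1] /=.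
  apply: (le_trans h1); rewrite lerD2l ler_nat; lia.
- by move=> n; exact: measurable_itv.
- by apply: measurable_funTS; exact: measurable_powR.
- by move=> x _; exact: powR_ge0.
- move=> n.
  have le : (e < e + n.+1%:R)%R by rewrite ltrDl.
  rewrite powFTC //; last by rewrite lt_eqF.
  rewrite lee_fin.
  have : ((e + n.+1%:R) `^ (q + 1) / (q + 1) <= 0)%R.
    by rewrite mulr_ge0_le0 // ?powR_ge0 // invr_le0 ltW.
  lra.
Qed.

Lemma cont_F (h : R -> R) (p x : R) : continuous h -> (0 < x)%R ->
  {for x, continuous (fun y => (h y / y `^ p)%R)}.
Proof.
move=> hc x0.
apply: cvgM; first exact: hc.
apply: cvgV; first by rewrite gt_eqF // powR_gt0.
exact: cont_powR.
Qed.

Lemma mF (h : R -> R) (p : R) (D : set R) : continuous h -> measurable D -> D `<=` `]0%R, +oo[%classic ->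
  measurable_fun D (fun x => ((h x / x `^ p)%:E)).
Proof.
move=> hc mD DS; apply/measurable_EFinP.
apply: (measurable_funS _ DS) => //.
apply: open_continuous_measurable_fun; first exact: interval_open.
move=> x; rewrite inE /= in_itv /= andbT => x0.
exact: cont_F.
Qed.

Lemma mP (p : R) (D : set R) : measurable D ->
  measurable_fun D (fun x => ((x `^ p)%:E)).
Proof.
move=> mD; apply/measurable_EFinP.
by apply: measurable_funTS; exact: measurable_powR.
Qed.

Lemma core (a d : R) (h : R -> R) : (0 < a)%R -> (a < 1)%R -> (0 < d)%R -> (d <= 1)%R ->
 continuous h ->
 (forall x, 0 < x -> 0 <= h x <= x ^+ 2)%R -> (forall x, 0 < x -> h x <= d * (1 + x) `^ a)%R ->
 \int[lebesgue_measure]_(x in `]0%R, +oo[) ((h x / x `^ (1 + 2*a))%:E)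
   <= ((((2 - 2*a)^-1 + 2 `^ a / a) * d `^ (1-a)))%:E.
Proof.
move=> a0 a1 d0 d1 hc hsq hd.
set e := Num.sqrt d.
have e0 : (0 < e)%R by rewrite sqrtr_gt0.
have e1 : (e <= 1)%R by rewrite -sqrtr1 ler_sqrt.
have ee : (e * e = d)%R by rewrite -expr2 sqr_sqrtr // ltW.
set A := `]0%R, e]%classic.
set B := `]e, +oo[%classic.
have AB : `]0%R, +oo[%classic = A `|` B.
  by rewrite (@itv_bndbnd_setU _ _ _ (BRight e)) // bnd_simp ltW.
have ABsub : A `|` B `<=` `]0%R, +oo[%classic by rewrite AB.
have F0 : forall x, (A `|` B) x -> 0 <= ((h x / x `^ (1 + 2*a))%:E).
  move=> x /ABsub; rewrite /= in_itv /= andbT => x0; rewrite lee_fin divr_ge0 ?powR_ge0 //.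
  by case/andP: (hsq x x0).
have mA : measurable A by exact: measurable_itv.
have mB : measurable B by exact: measurable_itv.
rewrite AB ge0_integral_setU //; last 2 first.
- by apply: mF => //; exact: measurableU.
- rewrite disj_set2E; apply/eqP/seteqP; split => x //=.
  rewrite /A /B /= !in_itv /= andbT => -[/andP[_ xe] ex].
  by move: (lt_le_trans ex xe); rewrite ltxx.
have hA : \int[lebesgue_measure]_(x in A) ((h x / x `^ (1 + 2*a))%:E)
    <= ((e `^ (2 - 2*a)) / (2 - 2*a))%:E.
  apply: (@le_trans _ _ (\int[lebesgue_measure]_(x in A) ((x `^ (1 - 2*a))%:E))).
  -
    apply: ge0_le_integral => //.
    - by move=> x Ax; apply: F0; left.
    - by apply: mF => //; move=> x Ax; apply: ABsub; left.
    - exact: mP.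
    move=> x; rewrite /A /= in_itv /= => /andP[x0 _].
    rewrite lee_fin; apply: (@le_trans _ _ ((x : R) ^+ 2 / (x : R) `^ (1 + 2*a))%R).
      rewrite ler_pM2r ?invr_gt0 ?powR_gt0 //.
      by case/andP: (hsq x x0).
    rewrite -(@powR_mulrn _ (x:R) 2) ?(ltW x0) // -powRB; last by apply/implyP => _; rewrite gt_eqF.
    by rewrite (_ : (2%:R - (1 + 2*a) = 1 - 2*a)%R) //; lra.
  have := @head_int (1 - 2*a)%R e.
  have -> : (1 - 2*a + 1 = 2 - 2*a)%R by lra.
  by apply; lra.
set K := (d * 2 `^ a / e `^ a)%R.
have K0 : (0 <= K)%R by rewrite /K !mulr_ge0 ?powR_ge0 ?invr_ge0 ?powR_ge0 // ltW.
have hB : \int[lebesgue_measure]_(x in B) ((h x / x `^ (1 + 2*a))%:E)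
    <= (K * (e `^ (- a) / a))%:E.
  have mK : forall D, measurable D -> measurable_fun D (fun x => ((K * x `^ (-1 - a))%:E)).
    move=> D mD; apply/measurable_EFinP; apply: measurable_funM => //.
    by apply: measurable_funTS; exact: measurable_powR.
  have K0x : forall x, 0 <= ((K * x `^ (-1 - a))%:E).
    by move=> x; rewrite lee_fin mulr_ge0 ?powR_ge0.
  apply: (@le_trans _ _ (\int[lebesgue_measure]_(x in B) ((K * x `^ (-1 - a))%:E))).
    apply: ge0_le_integral => //.
    - by move=> x Bx; apply: F0; right.
    - by apply: mF => //; move=> x Bx; apply: ABsub; right.
    - exact: mK.
    move=> x; rewrite /B /= in_itv /= andbT => ex.
    have x0 : (0 < x)%R by apply: lt_trans ex.
    rewrite lee_fin.
    apply: (@le_trans _ _ ((d * (1 + (x:R)) `^ a) / (x : R) `^ (1 + 2*a))%R).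
      rewrite ler_pM2r ?invr_gt0 ?powR_gt0 //.
      exact: hd.
    apply: (@le_trans _ _ ((K * (x:R) `^ a) / (x : R) `^ (1 + 2*a))%R).
      rewrite ler_pM2r ?invr_gt0 ?powR_gt0 //.
      rewrite /K -!mulrA ler_pM2l // mulrCA ler_pdivlMl ?powR_gt0 // mulrC.
      rewrite -!powRM ?(ltW x0) ?(ltW e0) //; last by lra.
      apply: ge0_ler_powR; rewrite ?nnegrE.
      - lra.
      - apply: mulr_ge0; lra.
      - lra.
      have : (0 <= (1 - e) * x)%R by rewrite mulr_ge0 //; lra.
      nra.
    rewrite -mulrA -powRB; last by apply/implyP => _; rewrite gt_eqF.
    by rewrite (_ : (a - (1 + 2*a) = -1 - a)%R) //; lra.
  apply: (@le_trans _ _ (\int[lebesgue_measure]_(x in `[e%R, +oo[) ((K * x `^ (-1 - a))%:E))).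
    apply: ge0_subset_integral => //.
    - by apply: mK; exact: measurable_itv.
    by move=> x; rewrite /B /= !in_itv /= !andbT => /ltW.
  under eq_integral do rewrite EFinM.
  rewrite ge0_integralZl_EFin //; last 2 first.
    - by move=> x _; rewrite lee_fin powR_ge0.
    - exact: mP.
  rewrite (EFinM K); apply: lee_wpmul2l; first by rewrite lee_fin.
  have := @tail_int (-1 - a)%R e.
  have -> : (-1 - a + 1 = - a)%R by lra.
  rewrite invrN mulrN opprK; apply; lra.
apply: le_trans (leeD hA hB) _.
rewrite -EFinD lee_fin.
have E1 : (e `^ (2 - 2*a) = d `^ (1-a))%R.
  rewrite (_ : (2 - 2*a = (1-a) + (1-a))%R); last by lra.
  rewrite powRD; last by apply/implyP => _; rewrite gt_eqF.
  by rewrite -powRM ?ltW // ee.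
have E2 : (K * e `^ (- a) = 2 `^ a * d `^ (1-a))%R.
  rewrite /K powRN -mulrA -invfM -powRM ?ltW // ee.
  rewrite powRB; last by apply/implyP => _; rewrite gt_eqF.
  by rewrite powRr1 ?ltW // mulrCA mulrA.
rewrite E1 mulrA E2.
apply/eqP; rewrite le_eqVlt eq_sym; apply/orP; left; apply/eqP.
ring.
Qed.

Local Close Scope ereal_scope.

Definition Ia (a : R) (f : R -> R) : \bar R :=
  \int[@lebesgue_measure R]_(xi in `]0, +oo[%classic)
          ((1 - f xi) / xi `^ (1 + 2 * a))%:E.

Lemma V1_props (a : R) f : V1 a f ->
  continuous f /\ (forall x, f x <= 1) /\ (forall x, 1 - x ^+ 2 <= f x) /\ (forall x, 0 <= f x).
Proof.
move=> [[fc [fe _]] [f01 [f0 [fm [_ [flb _]]]]]].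
split => //; split; last split => //.
  move=> x; have [x0|x0] := leP 0 x.
    by rewrite -f01; apply: fm.
  rewrite -fe -f01; apply: fm => //; lra.
move=> x; apply: le_trans (flb x); rewrite le_max lexx orbT //.
Qed.

Definition Bc (a : R) := (2 - 2*a)^-1 + 2 `^ a / a.

Lemma cont_h (g1 g2 : R -> R) : continuous g1 -> continuous g2 ->
  continuous (fun x => `|g1 x - g2 x|).
Proof.
move=> c1 c2 x; apply: cvg_norm; apply: cvgB; [exact: c1|exact: c2].
Qed.

Lemma I_bounds (a : R) f : 0 < a -> a < 1 -> V1 a f ->
  (0 <= Ia a f)%E /\ (Ia a f <= (Bc a)%:E)%E.
Proof.
move=> a0 a1 /V1_props [fc [f1 [flb f0]]].
split.
  apply: integral_ge0 => x; rewrite /= in_itv /= andbT => x0.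
  by rewrite lee_fin divr_ge0 ?powR_ge0 // subr_ge0.
have := @core a 1 (fun x => 1 - f x) a0 a1 ltr01 (lexx 1).
rewrite powR1 mulr1; apply.
- by move=> x; apply: cvgB; [exact: cvg_cst| exact: fc].
- by move=> x x0; rewrite subr_ge0 f1 /=; have := flb x; lra.
- move=> x x0; rewrite mul1r.
  apply: (@le_trans _ _ 1); first by have := f0 x; lra.
  apply: (@le_trans _ _ (1 `^ a)); first by rewrite powR1.
  apply: ge0_ler_powR; rewrite ?nnegrE; lra.
Qed.

Lemma I_diff (a d : R) g1 g2 : 0 < a -> a < 1 -> V1 a g1 -> V1 a g2 -> 0 < d -> d <= 1 ->
  (forall x, 0 < x -> `|g1 x - g2 x| <= d * (1 + x) `^ a) ->
  (Ia a g1 <= Ia a g2 + (Bc a * d `^ (1 - a))%:E)%E.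
Proof.
move=> a0 a1 V1g1 V1g2 d0 d1 hd.
have [g1c [g11 [g1lb g10]]] := @V1_props a g1 V1g1.
have [g2c [g21 [g2lb g20]]] := @V1_props a g2 V1g2.
set J := (\int[@lebesgue_measure R]_(x in `]0%R, +oo[%classic)
          ((`|g1 x - g2 x| / x `^ (1 + 2 * a))%:E))%E.
have hJ : (J <= (Bc a * d `^ (1 - a))%:E)%E.
  apply: core => //.
  - exact: cont_h.
  - move=> x x0; rewrite normr_ge0 /= ler_norml.
    have := g1lb x; have := g2lb x; have := g11 x; have := g21 x; lra.
apply: le_trans; last exact: (leeD2l (Ia a g2) hJ).
rewrite /Ia /J -ge0_integralD //; last 4 first.
- move=> x; rewrite /= in_itv /= andbT => x0.
  by rewrite lee_fin divr_ge0 ?powR_ge0 // subr_ge0.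
- apply: (@mF (fun x => 1 - g2 x)) => //; by move=> x; apply: cvgB; [exact: cvg_cst| exact: g2c].
- move=> x; rewrite /= in_itv /= andbT => x0.
  by rewrite lee_fin divr_ge0 ?powR_ge0.
- by apply: (@mF (fun x => `|g1 x - g2 x|)) => //; exact: cont_h.
apply: ge0_le_integral => //.
- move=> x; rewrite /= in_itv /= andbT => x0.
  by rewrite lee_fin divr_ge0 ?powR_ge0 // subr_ge0.
- by apply: (@mF (fun x => 1 - g1 x)) => //; move=> x; apply: cvgB; [exact: cvg_cst| exact: g1c].
- apply/measurable_EFinP; apply: measurable_funD.
    apply/measurable_EFinP; apply: (@mF (fun x => 1 - g2 x)) => //; move=> x; apply: cvgB; [exact: cvg_cst| exact: g2c].
  apply/measurable_EFinP; apply: (@mF (fun x => `|g1 x - g2 x|)) => //; exact: cont_h.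
move=> x; rewrite /= in_itv /= andbT => x0.
rewrite -EFinD lee_fin -mulrDl ler_pM2r ?invr_gt0 ?powR_gt0 //.
have := ler_norm (g2 x - g1 x); rewrite distrC; lra.
Qed.

End S.

Theorem mainTheorem5 (R : realType) (a : R) (ha0 : 0 < a) (ha1 : a < 1) :
  exists C : R, forall f1 f2 : R -> R, V1 a f1 -> V1 a f2 ->
    `|cf a f1 - cf a f2| <= C * (wLinf a (f1 \- f2)) `^ (1 - a).
Proof.
set Kc := 2 * a * (1 + 2 * a) / 3 * c1 a.
have Bc0 : 0 <= Bc R a.
  rewrite /Bc addr_ge0 // ?invr_ge0 ?divr_ge0 ?powR_ge0 //; lra.
exists (`|Kc| * Bc R a) => f1 f2 V1f1 V1f2.
have [f1c [f11 [f1lb f10]]] := @V1_props R a f1 V1f1.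
have [f2c [f21 [f2lb f20]]] := @V1_props R a f2 V1f2.
set w := wLinf a (f1 \- f2).
have one_le x : 0 <= x -> 1 <= (1 + x) `^ a.
  move=> x0; apply: (@le_trans _ _ (1 `^ a)); first by rewrite powR1.
  apply: ge0_ler_powR; rewrite ?nnegrE; lra.
have rho_pos x : 0 < rho a x by rewrite /rho powR_gt0 //; have := normr_ge0 x; lra.
have rho_le1 x : rho a x <= 1.
  have hx : 0 < 1 + `|x| by have := normr_ge0 x; lra.
  by rewrite /rho powRN invf_le1 ?powR_gt0 //; apply: one_le.
have diff1 x : `|f1 x - f2 x| <= 1.
  rewrite ler_norml; have := f10 x; have := f11 x; have := f20 x; have := f21 x; lra.
have hub : has_ubound [set `|rho a x * (f1 \- f2) x| | x in [set: R]].
  exists (1 : R) => _ [x _ <-]; rewrite normrM ger0_norm ?(ltW (rho_pos x)) //.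
  apply: (@le_trans _ _ (1 * 1)); last by rewrite mul1r.
  by apply: ler_pM; rewrite ?normr_ge0 ?(ltW (rho_pos x)) ?rho_le1 ?diff1.
have hw x : `|rho a x * (f1 x - f2 x)| <= w.
  by apply: (ub_le_sup hub); exists x.
have w0 : 0 <= w by apply: le_trans (normr_ge0 _) (hw 0).
have [w00 | wpos] : w = 0 \/ 0 < w.
  by move: w0; rewrite le_eqVlt => /orP[/eqP <-|->]; [left|right].
  have -> : f1 = f2.
    apply: funext => x; apply/eqP; rewrite -subr_eq0.
    have := hw x; rewrite w00 normr_le0 mulf_eq0 => /orP[|//].
    by rewrite gt_eqF.
  by rewrite subrr normr0 mulr_ge0 ?powR_ge0 // mulr_ge0.
have hd x : 0 < x -> `|f1 x - f2 x| <= w * (1 + x) `^ a.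
  move=> x0; have := hw x; rewrite normrM (ger0_norm (ltW (rho_pos x))).
  rewrite /rho powRN (gtr0_norm x0) ler_pdivrMl ?powR_gt0 1?mulrC //; lra.
have hd' x : 0 < x -> `|f2 x - f1 x| <= w * (1 + x) `^ a by rewrite distrC; exact: hd.
have w1 : w <= 1.
  apply: ge_sup; first by exists `|rho a 0 * (f1 \- f2) 0|, 0.
  move=> _ [x _ <-]; rewrite normrM ger0_norm ?(ltW (rho_pos x)) //.
  apply: (@le_trans _ _ (1 * 1)); last by rewrite mul1r.
  by apply: ler_pM; rewrite ?normr_ge0 ?(ltW (rho_pos x)) ?rho_le1 ?diff1.
have H12 := @I_diff R a w f1 f2 ha0 ha1 V1f1 V1f2 wpos w1 hd.
have H21 := @I_diff R a w f2 f1 ha0 ha1 V1f2 V1f1 wpos w1 hd'.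
have [I10 I1B] := @I_bounds R a f1 ha0 ha1 V1f1.
have [I20 I2B] := @I_bounds R a f2 ha0 ha1 V1f2.
have fin1 : Ia R a f1 \is a fin_num by rewrite ge0_fin_numE // (le_lt_trans I1B) // ltry.
have fin2 : Ia R a f2 \is a fin_num by rewrite ge0_fin_numE // (le_lt_trans I2B) // ltry.
move: H12 H21; rewrite -(fineK fin1) -(fineK fin2) -!EFinD !lee_fin => H12 H21.
have -> : cf a f1 = Kc * fine (Ia R a f1) by [].
have -> : cf a f2 = Kc * fine (Ia R a f2) by [].
rewrite -mulrBr normrM -mulrA ler_wpM2l //.
rewrite ler_norml; lra.
Qed.
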